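(* Let $A,B_1,\ldots,B_m\in\mathbb{C}^{d\times d}$, let $\{\xi_{n,k}: n\ge 1,\ 1\le k\le m\}$ be independent real-valued random variables with $\mathbb{E}\xi_{n,k}=0$ and $\mathbb{E}\xi_{n,k}^2=1$, and let $\mathbf{u},\mathbf{v}\in\mathbb{C}^d$ be non-random. Define $\mathbb{C}^d$-valued random sequences by \[ \mathbf{x}(n+1)=A\mathbf{x}(n)+\sum_{k=1}^m B_k\mathbf{x}(n)\xi_{n+1,k},\ \mathbf{x}(0)=\mathbf{u};\qquad \mathbf{y}(n+1)=A\mathbf{y}(n)+\sum_{k=1}^m B_k\mathbf{y}(n)\xi_{n+1,k},\ \mathbf{y}(0)=\mathbf{v}. \] Let $V(n)=\mathbb{E}\,\mathbf{x}(n)\mathbf{y}^*(n)$, $\mathbf{U}(n)=\mathrm{vec}(V(n))$ and $r_x(n)=\mathbb{E}|\mathbf{x}(n)|^2$. Then \[ \mathbf{U}(n)=D_{A,B}^n\,\mathbf{U}(0),\qquad D_{A,B}=\overline{A}\otimes A+\sum_{k=1}^m\overline{B}_k\otimes B_k, \] and \[ |\mathbf{u}|^2\gamma^n\le r_x(n)\le |\mathbf{u}|^2\beta^n \quad\text{for all } n\ge 0, \] where $\gamma$ and $\beta$ are the smallest and largest eigenvalues of the non-negative Hermitian matrix $N_{A,B}=A^*A+\sum_{k=1}^m B_k^*B_k$.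
   Context: For $X\in\mathbb{C}^{d\times d}$, $\mathrm{vec}(X)\in\mathbb{C}^{d^2}$ is the column vector obtained by stacking the columns of $X$ left to right: $(X_{11},\ldots,X_{d1},X_{12},\ldots,X_{d2},\ldots,X_{1d},\ldots,X_{dd})^\top$. $\overline{X}$ is entrywise conjugate, $X^*$ conjugate transpose, $\otimes$ the Kronecker product, $|\cdot|$ the Euclidean norm. *)

(* Defs.v *)
From mathcomp Require Import all_boot all_order all_algebra.
From mathcomp Require Import all_classical all_reals all_analysis.
From mathcomp Require Export complex mxtens.
Set Implicit Arguments. Unset Strict Implicit. Unset Printing Implicit Defensive.
Import Order.TTheory GRing.Theory Num.Theory.
Local Open Scope ring_scope.
Local Open Scope complex_scope.
Local Open Scope classical_set_scope.

Section Defs.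
Context {R : realType} {dm : measure_display} {T : measurableType dm}.

Definition mutually_independent {I : eqType} (P : probability T R) (S : pred I)
  (X : I -> T -> R) : Prop :=
  forall (J : seq I) (B : I -> set R), uniq J -> all S J ->
    (forall i, measurable (B i)) ->
    P [set t | forall i, i \in J -> B i (X i t)] =
    (\prod_(i <- J) P [set t | B i (X i t)])%E.

Definition cexpect (P : probability T R) (f : T -> R[i]) : R[i] :=
  (Rintegral P setT (fun t => complex.Re (f t))) +i* (Rintegral P setT (fun t => complex.Im (f t))).

Fixpoint sproc {d m : nat} (A : 'M[R[i]]_d) (B : 'I_m -> 'M[R[i]]_d)
  (xi : nat -> 'I_m -> T -> R) (u : 'cV[R[i]]_d) (n : nat) : T -> 'cV[R[i]]_d :=
  match n with
  | 0 => fun _ => u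
  | n'.+1 => fun t => A *m sproc A B xi u n' t
              + \sum_(k < m) (xi n'.+1 k t)%:C *: (B k *m sproc A B xi u n' t)
  end.

Definition Vmat {d : nat} (P : probability T R) (x y : nat -> T -> 'cV[R[i]]_d)
  (n : nat) : 'M[R[i]]_d :=
  \matrix_(i, j) cexpect P (fun t => x n t i 0 * (y n t j 0)^*).

End Defs.

Definition vnorm2 {R : rcfType} {d : nat} (v : 'cV[R[i]]_d) : R :=
  \sum_(i < d) ((complex.Re (v i 0)) ^+ 2 + (complex.Im (v i 0)) ^+ 2).

Definition conjmx {R : rcfType} {p q : nat} (M : 'M[R[i]]_(p, q)) := map_mx conjc M.
Definition ctrmx {R : rcfType} {p q : nat} (M : 'M[R[i]]_(p, q)) := (conjmx M)^T.

(* vec: stack the columns; entry of index j*d+i (= mxtens_index (j,i)) is X i j. *)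
Definition vec {R : Type} {d : nat} (X : 'M[R]_d) : 'cV[R]_(d * d) :=
  \col_k X (mxtens_unindex k).2 (mxtens_unindex k).1.

Definition DAB {R : rcfType} {d m : nat} (A : 'M[R[i]]_d) (B : 'I_m -> 'M[R[i]]_d)
  : 'M[R[i]]_(d * d) :=
  conjmx A *t A + \sum_(k < m) conjmx (B k) *t B k.

Definition NAB {R : rcfType} {d m : nat} (A : 'M[R[i]]_d) (B : 'I_m -> 'M[R[i]]_d)
  : 'M[R[i]]_d :=
  ctrmx A *m A + \sum_(k < m) ctrmx (B k) *m B k.

(* Main.v *)
Require Import Defs.
From mathcomp Require Import all_boot all_order all_algebra.
From mathcomp Require Import all_classical all_reals all_analysis.
From mathcomp Require Import complex mxtens.
From mathcomp Require Import finmap measurable_realfun.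
From mathcomp Require Import spectral sesquilinear.
From mathcomp Require Import ring lra.
Set Implicit Arguments. Unset Strict Implicit. Unset Printing Implicit Defensive.
Import Order.TTheory GRing.Theory Num.Theory.
Import numFieldNormedType.Exports.
Import HBNNSimple.
Local Open Scope ring_scope.
Local Open Scope classical_set_scope.
Local Notation mEFinP := measurable_realfun.measurable_EFinP.
Local Notation mfunM := measurable_realfun.measurable_funM.
Local Notation mindic := measurable_realfun.measurable_indic.

Section EL.
Context d (T : measurableType d) (R : realType) (mu : {measure set T -> \bar R}).

Lemma nnsfun_range_ge0 (s : {nnsfun R >-> R}) i :
  (0 <= (fset_set (range s))`_i)%R.
Proof.
have [lt|ge] := ltnP i (size (fset_set (range s))).
- have := mem_nth 0 lt; rewrite in_fset_set; last exact: fimfunP.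
  by move=> /set_mem [x _ <-]; exact: fun_ge0.
- by rewrite nth_default.
Qed.

Lemma int_sfun_comp (f : T -> R) (H : T -> R) (s : {nnsfun R >-> R}) :
  measurable_fun setT f -> measurable_fun setT H -> (forall t, 0 <= H t)%R ->
  (\int[mu]_t (s (f t) * H t)%:E =
  \sum_(i < #|` fset_set (range s)|)
     ((fset_set (range s))`_i)%:E *
       \int[mu]_t ((\1_(s @^-1` [set (fset_set (range s))`_i]) (f t)) * H t)%:E)%E.
Proof.
move=> mf mH H0.
set S := fset_set (range s).
have mB i : measurable (s @^-1` [set S`_i]) by exact: measurable_funPTI.
transitivity (\int[mu]_t (\sum_(i < #|` S|)
   ((S`_i)%:E * ((\1_(s @^-1` [set S`_i]) (f t)) * H t)%:E)))%E.
  apply: eq_integral => t _; rewrite (fimfunEord s (f t)) big_distrl /= sumEFin.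
  by congr EFin; apply: eq_bigr => i _; rewrite mulrA.
rewrite ge0_integral_sum //.
- apply: eq_bigr => i _; rewrite ge0_integralZl_EFin //.
  + by move=> t _; rewrite lee_fin mulr_ge0 // ?H0.
  + apply/measurable_realfun.measurable_EFinP; apply: measurable_realfun.measurable_funM => //.
    exact: measurableT_comp (measurable_realfun.measurable_indic (mB i)) mf.
  + exact: nnsfun_range_ge0.
- move=> i; apply: measurable_funeM; apply/measurable_realfun.measurable_EFinP.
  apply: measurable_realfun.measurable_funM => //.
  exact: measurableT_comp (measurable_realfun.measurable_indic (mB i)) mf.
- move=> i t _; rewrite -EFinM lee_fin mulr_ge0 ?mulr_ge0 ?H0 //.
  exact: nnsfun_range_ge0.
Qed.

End EL.
Section EL2.
Context d (T : measurableType d) (R : realType) (mu : {measure set T -> \bar R}).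

Lemma EL (f G : T -> R) (c : R) : measurable_fun setT f -> measurable_fun setT G ->
  (forall t, 0 <= G t)%R -> (0 <= c)%R ->
  (forall B, measurable B ->
     \int[mu]_t ((\1_B (f t)) * G t)%:E = c%:E * mu (f @^-1` B))%E ->
  forall phi : R -> R, measurable_fun setT phi -> (forall x, 0 <= phi x)%R ->
  (\int[mu]_t (phi (f t) * G t)%:E = c%:E * \int[mu]_t (phi (f t))%:E)%E.
Proof.
move=> mf mG G0 c0 hB phi mphi phi0.
have step1 (s : {nnsfun R >-> R}) :
    (\int[mu]_t (s (f t) * G t)%:E = c%:E * \int[mu]_t (s (f t))%:E)%E.
  rewrite int_sfun_comp //.
  transitivity (c%:E * \int[mu]_t (s (f t) * 1)%:E)%E; last first.
    by under eq_integral do rewrite mulr1.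
  rewrite int_sfun_comp //.
  rewrite ge0_sume_distrr; last first.
    move=> i _; apply: mule_ge0; first by rewrite lee_fin nnsfun_range_ge0.
    by apply: integral_ge0 => t _; rewrite lee_fin mulr1 indicE.
  apply: eq_bigr => i _.
  have mB : measurable (s @^-1` [set (fset_set (range s))`_i]).
    exact: measurable_funPTI.
  rewrite hB // muleCA; congr (_ * _)%E.
  under eq_integral do rewrite mulr1.
  rewrite -[f @^-1` _]setIT -integral_indic //; last by rewrite -[f @^-1` _]setTI; exact: mf.
have mphi' : measurable_fun setT (fun x => (phi x)%:E) by exact/mEFinP.
pose g := nnsfun_approx measurableT mphi'.
have phi0' : forall x, setT x -> (0 <= (phi x)%:E)%E by move=> x _; rewrite lee_fin.
have gcvg x : (g n x)%:E @[n --> \oo] --> (phi x)%:E.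
  exact: (cvg_nnsfun_approx measurableT mphi' phi0').
have gnd x : {homo (g^~ x) : n m / (n <= m)%N >-> (n <= m)%R}.
  by move=> n m nm; have /lefP := nd_nnsfun_approx measurableT mphi' nm; apply.
have mgf n : measurable_fun setT (fun t => g n (f t)).
  exact: measurableT_comp (@measurable_funPT _ _ _ _ (g n)) mf.
have L1 : (\int[mu]_t (g n (f t) * G t)%:E)%E @[n --> \oo] -->
          (\int[mu]_t (phi (f t) * G t)%:E)%E.
  have := @cvg_monotone_convergence _ _ _ mu setT measurableT
    (fun n t => (g n (f t) * G t)%:E).
  have -> : (fun t => limn ((fun n t => (g n (f t) * G t)%:E)^~ t)) =
            (fun t => (phi (f t) * G t)%:E).
    apply/funext => t; apply/cvg_lim => //.
    under eq_fun do rewrite EFinM.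
    rewrite EFinM; apply: cvgeZr => //; exact: gcvg.
  apply.
  - by move=> n; apply/mEFinP; exact: mfunM.
  - by move=> n t _; rewrite lee_fin mulr_ge0 // ?G0 // fun_ge0.
  - by move=> t _ n m nm; rewrite lee_fin ler_wpM2r // ?G0 // gnd.
have L2 : (\int[mu]_t (g n (f t))%:E)%E @[n --> \oo] -->
          (\int[mu]_t (phi (f t))%:E)%E.
  have := @cvg_monotone_convergence _ _ _ mu setT measurableT
    (fun n t => (g n (f t))%:E).
  have -> : (fun t => limn ((fun n t => (g n (f t))%:E)^~ t)) =
            (fun t => (phi (f t))%:E).
    by apply/funext => t; apply/cvg_lim => //; exact: gcvg.
  apply.
  - by move=> n; apply/mEFinP.
  - by move=> n t _; rewrite lee_fin fun_ge0.
  - by move=> t _ n m nm; rewrite lee_fin gnd.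
have cfin : (c%:E \is a fin_num)%E by [].
have L3 := cvgeZl cfin L2.
rewrite -(cvg_lim _ L1) // -(cvg_lim _ L3) //.
by congr (limn _); apply/funext => n; exact: step1.
Qed.
End EL2.
Section NL.
Context (R : realType) (dm : measure_display) (T : measurableType dm)
  (P : probability T R) (m : nat) (xi : nat -> 'I_m -> T -> R).
Hypothesis xi_meas : forall n k, (0 < n)%N -> measurable_fun setT (xi n k).
Hypothesis xi_indep : forall (J : seq (nat * 'I_m)) (B : (nat * 'I_m) -> set R),
    uniq J -> all (fun nk : nat * 'I_m => (0 < nk.1)%N) J ->
    (forall i, measurable (B i)) ->
    P [set t | forall i, i \in J -> B i (xi i.1 i.2 t)] =
    (\prod_(i <- J) P [set t | B i (xi i.1 i.2 t)])%E.

Definition V := (nat * 'I_m)%type.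
Definition X (v : V) := xi v.1 v.2.
Definition pos (v : V) := (0 < v.1)%N.

Lemma mX v : pos v -> measurable_fun setT (X v).
Proof. exact: xi_meas. Qed.

Lemma mprod (I : eqType) (s : seq I) (F : I -> T -> R) :
  (forall i, i \in s -> measurable_fun setT (F i)) ->
  measurable_fun setT (fun t => \prod_(i <- s) F i t).
Proof.
elim: s => [|a s IH] H.
  by under eq_fun do rewrite big_nil; exact: measurable_cst.
under eq_fun do rewrite big_cons.
apply: mfunM; first by apply: H; rewrite mem_head.
by apply: IH => i si; apply: H; rewrite in_cons si orbT.
Qed.

Definition Bf (L : seq (V * set R)) (i : V) : set R :=
  foldr (fun p acc => if p.1 == i then p.2 else acc) setT L.

Lemma BfP (L : seq (V * set R)) p : uniq (map fst L) -> p \in L -> Bf L p.1 = p.2.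
Proof.
elim: L => [//|q L IH] /= /andP[qL uL]; rewrite in_cons => /orP[/eqP->|pL].
  by rewrite eqxx.
case: eqP => [qp|_]; last exact: IH.
by move: qL; rewrite qp; move/negP; case; apply/mapP; exists p.
Qed.

Lemma mBf (L : seq (V * set R)) i : (forall p, p \in L -> measurable p.2) ->
  measurable (Bf L i).
Proof.
elim: L => [|q L IH] H /=; first exact: measurableT.
case: ifP => _; first by apply: H; rewrite mem_head.
by apply: IH => p pL; apply: H; rewrite in_cons pL orbT.
Qed.

Definition prodL2 (L : seq (V * set R)) t : R := \prod_(p <- L) (\1_(p.2) (X p.1 t) : R).

Lemma base (L : seq (V * set R)) : uniq (map fst L) -> all pos (map fst L) ->
  (forall p, p \in L -> measurable p.2) ->
  (\int[P]_t (prodL2 L t)%:E = (\prod_(p <- L) fine (P [set t | p.2 (X p.1 t)]))%:E)%E.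
Proof.
move=> uL pL mL.
set S := [set t | forall i, i \in map fst L -> Bf L i (X i t)].
have eqS : prodL2 L = \1_S.
  apply/funext => t; rewrite indicE /prodL2.
  have [allp|nallp] := pselect (forall p, p \in L -> p.2 (X p.1 t)).
    rewrite mem_set; last first.
      by move=> i /mapP[p pL' ->]; rewrite BfP //; exact: allp.
    by rewrite big1_seq // => p /andP[_ pL']; rewrite indicE mem_set //; exact: allp.
  rewrite memNset; last first.
    move=> St; apply: nallp => p pL'; rewrite -(BfP uL pL'); apply: St.
    by apply/mapP; exists p.
  have [p pL' np] : exists2 p, p \in L & ~ p.2 (X p.1 t).
    apply: contra_notP nallp => H p pL'; apply: contra_notP H => np.
    by exists p.
  by rewrite (big_rem p) //= indicE memNset // mul0r.
have mS : measurable S.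
  apply/(measurable_indicP R); rewrite -eqS; apply: mprod => p pL'.
  apply: measurableT_comp; first exact: mindic (mL p pL').
  apply: mX; by move/allP: pL; apply; apply/mapP; exists p.
rewrite eqS integral_indic // setIT.
transitivity (\prod_(i <- map fst L) P [set t | Bf L i (X i t)])%E.
  by apply: xi_indep => // i; exact: mBf.
rewrite big_map -prodEFin; apply: eq_big_seq => p pL'.
rewrite fineK ?fin_num_measure //=; first by rewrite (BfP uL pL').
rewrite -[X in measurable X]setTI; apply: (mX _ measurableT (mL p pL')).
by move/allP: pL; apply; apply/mapP; exists p.
Qed.
End NL.
Section NL2.
Context (R : realType) (dm : measure_display) (T : measurableType dm)
  (P : probability T R) (m : nat) (xi : nat -> 'I_m -> T -> R).
Hypothesis xi_meas : forall n k, (0 < n)%N -> measurable_fun setT (xi n k).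
Hypothesis xi_indep : forall (J : seq (nat * 'I_m)) (B : (nat * 'I_m) -> set R),
    uniq J -> all (fun nk : nat * 'I_m => (0 < nk.1)%N) J ->
    (forall i, measurable (B i)) ->
    P [set t | forall i, i \in J -> B i (xi i.1 i.2 t)] =
    (\prod_(i <- J) P [set t | B i (xi i.1 i.2 t)])%E.
Local Notation X := (X xi).
Local Notation V := (V m).
Local Notation prodL2 := (prodL2 xi).

Definition prodL1 (L : seq (V * (R -> R))) t : R := \prod_(p <- L) p.2 (X p.1 t).
Definition Eint (f : T -> R) : R := fine (\int[P]_t (f t)%:E).

Lemma NL (L1 : seq (V * (R -> R))) (L2 : seq (V * set R)) :
  uniq (map fst L1 ++ map fst L2) -> all (@pos m) (map fst L1 ++ map fst L2) ->
  (forall p, p \in L1 -> [/\ measurable_fun setT p.2, (forall x, 0 <= p.2 x) &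
       P.-integrable setT (fun t => (p.2 (X p.1 t))%:E)]) ->
  (forall p, p \in L2 -> measurable p.2) ->
  (\int[P]_t (prodL1 L1 t * prodL2 L2 t)%:E =
   ((\prod_(p <- L1) Eint (fun t => p.2 (X p.1 t))) *
     \prod_(p <- L2) fine (P [set t | p.2 (X p.1 t)]))%:E)%E.
Proof.
elim: L1 L2 => [|[v phi] L1 IH] L2 u ps H1 H2.
  rewrite big_nil mul1r -(base xi_meas xi_indep) //.
  by apply: eq_integral => t _; rewrite /prodL1 big_nil mul1r.
have pv : pos v by move: ps => /= /andP[].
have mXv := mX xi_meas pv.
have [mphi phi0 iphi] := H1 (v, phi) (mem_head _ _).
have H1' p : p \in L1 -> [/\ measurable_fun setT p.2, (forall x, 0 <= p.2 x) &
       P.-integrable setT (fun t => (p.2 (X p.1 t))%:E)].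
  by move=> pL; apply: H1; rewrite in_cons pL orbT.
have posL1 p : p \in L1 -> pos p.1.
  by move=> pL; move/allP: ps; apply; rewrite /= in_cons mem_cat map_f ?pL ?orbT.
have posL2 p : p \in L2 -> pos p.1.
  by move=> pL; move/allP: ps; apply; rewrite /= in_cons mem_cat map_f ?pL ?orbT.
pose G t := prodL1 L1 t * prodL2 L2 t.
have mG : measurable_fun setT G.
  apply: mfunM; apply: (mprod (T:=T)) => p pL.
    by apply: measurableT_comp; [case: (H1' p pL)|exact: mX (posL1 p pL)].
  apply: measurableT_comp; first exact: mindic (H2 p pL).
  exact: mX (posL2 p pL).
have G0 t : 0 <= G t.
  apply: mulr_ge0; rewrite /prodL1 /prodL2 big_seq; apply: prodr_ge0 => p pL.
    by case: (H1' p pL).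
  by rewrite indicE.
pose c := (\prod_(p <- L1) Eint (fun t => p.2 (X p.1 t))) *
     \prod_(p <- L2) fine (P [set t | p.2 (X p.1 t)]).
have c0 : 0 <= c.
  apply: mulr_ge0; rewrite big_seq; apply: prodr_ge0 => p pL; apply: fine_ge0.
    by apply: integral_ge0 => t _; rewrite lee_fin; case: (H1' p pL).
  exact: measure_ge0.
have hB B : measurable B ->
    (\int[P]_t ((\1_B (X v t)) * G t)%:E = c%:E * P (X v @^-1` B))%E.
  move=> mB.
  have PB : P (X v @^-1` B) = (fine (P [set t | B (X v t)]))%:E.
    rewrite fineK // fin_num_measure //.
    by rewrite -[X in measurable X]setTI; exact: mXv.
  transitivity (\int[P]_t (prodL1 L1 t * prodL2 ((v, B) :: L2) t)%:E)%E.
    apply: eq_integral => t _; rewrite /prodL2 big_cons /= /G.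
    by rewrite mulrCA.
  rewrite IH.
  - by rewrite big_cons /= PB -EFinM /c /=; congr EFin; ring.
  - by move: u; rewrite /= -cat1s uniq_catCA.
  - by move: ps; rewrite /= !all_cat /= => /and3P[-> -> ->].
  - exact: H1'.
  - move=> p; rewrite in_cons => /orP[/eqP->//|]; exact: H2.
have := EL mXv mG G0 c0 hB mphi phi0.
have -> : (\int[P]_t (phi (X v t))%:E)%E = (Eint (fun t => phi (X v t)))%:E.
  by rewrite fineK //; exact: integrable_fin_num.
rewrite -EFinM => HE.
transitivity (\int[P]_t (phi (X v t) * G t)%:E)%E.
  by apply: eq_integral => t _; rewrite /prodL1 big_cons /= /G -mulrA.
by rewrite HE big_cons /= /c; congr EFin; ring.
Qed.
End NL2.

Lemma funrpos_le_norm (R : realType) (f : R -> R) x : `|f^\+ x| <= `|f x|.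
Proof.
have := congr1 (fun h => h x) (funrposDneg f); rewrite /= => <-.
rewrite (ger0_norm (funrpos_ge0 f x)) !fctE lerDl funrneg_ge0 //.
Qed.

Lemma funrneg_le_norm (R : realType) (f : R -> R) x : `|f^\- x| <= `|f x|.
Proof.
have := congr1 (fun h => h x) (funrposDneg f); rewrite /= => <-.
rewrite (ger0_norm (funrneg_ge0 f x)) !fctE lerDr funrpos_ge0 //.
Qed.

Lemma funrposBneg_pt (R : realType) (f : R -> R) x : f^\+ x - f^\- x = f x.
Proof. by have := congr1 (fun h => h x) (funrposBneg f). Qed.

Section SL.
Context (R : realType) (dm : measure_display) (T : measurableType dm)
  (P : probability T R) (m : nat) (xi : nat -> 'I_m -> T -> R).
Hypothesis xi_meas : forall n k, (0 < n)%N -> measurable_fun setT (xi n k).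
Hypothesis xi_indep : forall (J : seq (nat * 'I_m)) (B : (nat * 'I_m) -> set R),
    uniq J -> all (fun nk : nat * 'I_m => (0 < nk.1)%N) J ->
    (forall i, measurable (B i)) ->
    P [set t | forall i, i \in J -> B i (xi i.1 i.2 t)] =
    (\prod_(i <- J) P [set t | B i (xi i.1 i.2 t)])%E.
Local Notation X := (X xi).
Local Notation V := (V m).
Local Notation prodL1 := (prodL1 xi).
Local Notation Eint := (Eint P).

Lemma int_comp (v : V) (phi : R -> R) (g : R -> R) : pos v ->
  measurable_fun setT g -> (forall x, `|g x| <= `|phi x|) ->
  P.-integrable setT (fun t => (phi (X v t))%:E) ->
  P.-integrable setT (fun t => (g (X v t))%:E).
Proof.
move=> pv mg gphi ip; apply: le_integrable ip => //.
  by apply/mEFinP; apply: measurableT_comp mg (mX xi_meas pv).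
by move=> t _; rewrite !abse_EFin lee_fin.
Qed.

Lemma SL (L2 L1 : seq (V * (R -> R))) :
  uniq (map fst L1 ++ map fst L2) -> all (@pos m) (map fst L1 ++ map fst L2) ->
  (forall p, p \in L1 -> [/\ measurable_fun setT p.2, (forall x, 0 <= p.2 x) &
       P.-integrable setT (fun t => (p.2 (X p.1 t))%:E)]) ->
  (forall p, p \in L2 -> measurable_fun setT p.2 /\
       P.-integrable setT (fun t => (p.2 (X p.1 t))%:E)) ->
  P.-integrable setT (fun t => (prodL1 L1 t * prodL1 L2 t)%:E) /\
  Eint (fun t => prodL1 L1 t * prodL1 L2 t) =
   (\prod_(p <- L1) Eint (fun t => p.2 (X p.1 t))) *
   (\prod_(p <- L2) Eint (fun t => p.2 (X p.1 t))).
Proof.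
elim: L2 L1 => [|[v phi] L2 IH] L1 u ps H1 H2.
  have E1 : (\int[P]_t (prodL1 L1 t * prodL2 xi [::] t)%:E =
     ((\prod_(p <- L1) Eint (fun t => p.2 (X p.1 t))) *
       \prod_(p <- [::]) fine (P [set t | p.2 (X p.1 t)]))%:E)%E.
    by apply: (NL xi_meas xi_indep) => //.
  have eqf : (fun t => (prodL1 L1 t * prodL1 [::] t)%:E) =
             (fun t => (prodL1 L1 t * prodL2 xi [::] t)%:E).
    by apply/funext => t; rewrite /prodL1 /prodL2 !big_nil.
  rewrite eqf; split.
    apply/integrableP; split.
      apply/mEFinP; apply: mfunM; last first.
        by rewrite /prodL2; under eq_fun do rewrite big_nil; exact: measurable_cst.
      apply: (mprod (T := T)) => p pL; apply: measurableT_comp.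
        by case: (H1 p pL).
      by apply: (mX xi_meas); move/allP: ps; apply; rewrite mem_cat map_f.
    rewrite (_ : (fun x => _) = (fun t => (prodL1 L1 t * prodL2 xi [::] t)%:E)).
      by rewrite E1 ltry.
    apply/funext => t; rewrite abse_EFin ger0_norm //.
    rewrite /prodL2 big_nil mulr1 /prodL1 big_seq; apply: prodr_ge0 => p pL.
    by case: (H1 p pL).
  by rewrite /Eint eqf E1 /= !big_nil.
have pv : pos v by move/allP: ps; apply; rewrite mem_cat /= in_cons eqxx orbT.
have [mphi iphi] := H2 (v, phi) (mem_head _ _).
have H2' p : p \in L2 -> measurable_fun setT p.2 /\
       P.-integrable setT (fun t => (p.2 (X p.1 t))%:E).
  by move=> pL; apply: H2; rewrite in_cons pL orbT.
have u' : uniq (map fst ((v, phi^\+) :: L1) ++ map fst L2).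
  by move: u; rewrite /= -cat1s uniq_catCA.
have u'' : uniq (map fst ((v, phi^\-) :: L1) ++ map fst L2) by [].
have ps' : all (@pos m) (map fst ((v, phi^\+) :: L1) ++ map fst L2).
  by move: ps; rewrite /= !all_cat /= pv.
have ps'' : all (@pos m) (map fst ((v, phi^\-) :: L1) ++ map fst L2) by [].
have H1p : forall p, p \in (v, phi^\+) :: L1 -> [/\ measurable_fun setT p.2,
    (forall x, 0 <= p.2 x) & P.-integrable setT (fun t => (p.2 (X p.1 t))%:E)].
  move=> p; rewrite in_cons => /orP[/eqP->|pL]; last exact: H1.
  split => /=; [exact: measurable_funrpos|move=> x; exact: funrpos_ge0|].
  apply: int_comp iphi => //; [exact: measurable_funrpos|exact: funrpos_le_norm].
have H1n : forall p, p \in (v, phi^\-) :: L1 -> [/\ measurable_fun setT p.2,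
    (forall x, 0 <= p.2 x) & P.-integrable setT (fun t => (p.2 (X p.1 t))%:E)].
  move=> p; rewrite in_cons => /orP[/eqP->|pL]; last exact: H1.
  split => /=; [exact: measurable_funrneg|move=> x; exact: funrneg_ge0|].
  apply: int_comp iphi => //; [exact: measurable_funrneg|exact: funrneg_le_norm].
have [ip Ep] := IH ((v, phi^\+) :: L1) u' ps' H1p H2'.
have [in_ En] := IH ((v, phi^\-) :: L1) u'' ps'' H1n H2'.
have eqf : (fun t => prodL1 L1 t * prodL1 ((v, phi) :: L2) t) =
  (fun t => prodL1 ((v, phi^\+) :: L1) t * prodL1 L2 t -
            prodL1 ((v, phi^\-) :: L1) t * prodL1 L2 t).
  apply/funext => t; rewrite /prodL1 !big_cons /= -(funrposBneg_pt phi (X v t)); ring.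
rewrite eqf; split.
  apply: (eq_integrable measurableT _ _ _ (integrableB measurableT ip in_)).
  move=> t _ /=; rewrite -EFinD /prodL1 !big_cons /= -(funrposBneg_pt phi (X v t)).
  by congr EFin; ring.
transitivity (Eint (fun t => prodL1 ((v, phi^\+) :: L1) t * prodL1 L2 t) -
   Eint (fun t => prodL1 ((v, phi^\-) :: L1) t * prodL1 L2 t)).
  exact: (RintegralB measurableT ip in_).
rewrite Ep En !big_cons /=.
have ip' : P.-integrable setT (fun t => (phi^\+ (X v t))%:E).
  by apply: int_comp iphi => //; [exact: measurable_funrpos|exact: funrpos_le_norm].
have in' : P.-integrable setT (fun t => (phi^\- (X v t))%:E).
  by apply: int_comp iphi => //; [exact: measurable_funrneg|exact: funrneg_le_norm].
have -> : Eint (fun t => phi (X v t)) =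
          Eint (fun t => phi^\+ (X v t)) - Eint (fun t => phi^\- (X v t)).
  rewrite -[RHS](RintegralB measurableT ip' in').
  by apply: eq_Rintegral => t _; rewrite funrposBneg_pt.
ring.
Qed.
End SL.

Fixpoint W (m n : nat) : finType :=
  if n is n'.+1 then (option 'I_m * W m n')%type else unit.

Section KEY.
Context (R : realType) (dm : measure_display) (T : measurableType dm)
  (P : probability T R) (m : nat) (xi : nat -> 'I_m -> T -> R).
Hypothesis xi_meas : forall n k, (0 < n)%N -> measurable_fun setT (xi n k).
Hypothesis xi_indep : forall (J : seq (nat * 'I_m)) (B : (nat * 'I_m) -> set R),
    uniq J -> all (fun nk : nat * 'I_m => (0 < nk.1)%N) J ->
    (forall i, measurable (B i)) ->
    P [set t | forall i, i \in J -> B i (xi i.1 i.2 t)] =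
    (\prod_(i <- J) P [set t | B i (xi i.1 i.2 t)])%E.
Hypothesis xi_int : forall n k, (0 < n)%N -> P.-integrable setT (fun t => (xi n k t)%:E).
Hypothesis xi_int2 : forall n k, (0 < n)%N -> P.-integrable setT (fun t => (xi n k t ^+ 2)%:E).
Hypothesis xi_mean : forall n k, (0 < n)%N -> Rintegral P setT (xi n k) = 0.
Hypothesis xi_var : forall n k, (0 < n)%N -> Rintegral P setT (fun t => xi n k t ^+ 2) = 1.
Local Notation X := (X xi).
Local Notation V := (V m).
Local Notation prodL1 := (prodL1 xi).
Local Notation Eint := (Eint P).

Definition pw (b : bool) (x : R) := if b then x ^+ 2 else x.

Lemma P4 (L : seq (V * bool)) : uniq (map fst L) -> all (@pos m) (map fst L) ->
  P.-integrable setT (fun t => (\prod_(p <- L) pw p.2 (X p.1 t))%:E) /\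
  Eint (fun t => \prod_(p <- L) pw p.2 (X p.1 t)) =
    \prod_(p <- L) (if p.2 then 1 else 0).
Proof.
move=> uL pL.
have := SL xi_meas xi_indep (L1 := [::]) (L2 := map (fun p => (p.1, pw p.2)) L).
rewrite /= -map_comp.
have eqf : forall t, prodL1 [::] t * prodL1 (map (fun p => (p.1, pw p.2)) L) t =
     \prod_(p <- L) pw p.2 (X p.1 t).
  by move=> t; rewrite /prodL1 big_nil mul1r big_map.
move=> /(_ uL pL) [].
- by [].
- move=> p /mapP[q qL ->] /=.
  have pq : pos q.1 by move/allP: pL; apply; exact: map_f.
  case: q.2 => /=; split.
  + by apply: measurable_funX; exact: measurable_id.
  + exact: xi_int2.
  + exact: measurable_id.
  + exact: xi_int.
move=> ip Ep; split.
  by apply: (eq_integrable measurableT _ _ _ ip) => t _; rewrite eqf.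
rewrite (_ : (fun t => _) = (fun t => prodL1 [::] t * prodL1 (map (fun p => (p.1, pw p.2)) L) t)); last first.
  by apply/funext => t; rewrite eqf.
rewrite Ep big_nil mul1r big_map big_seq [RHS]big_seq; apply: eq_bigr => p pL'.
have pq : pos p.1 by move/allP: pL; apply; exact: map_f.
by case: p.2 => /=; [exact: xi_var|exact: xi_mean].
Qed.
End KEY.
Section Words.
Context (R : realType) (dm : measure_display) (T : measurableType dm)
  (P : probability T R) (m : nat) (xi : nat -> 'I_m -> T -> R).
Hypothesis xi_meas : forall n k, (0 < n)%N -> measurable_fun setT (xi n k).
Hypothesis xi_indep : forall (J : seq (nat * 'I_m)) (B : (nat * 'I_m) -> set R),
    uniq J -> all (fun nk : nat * 'I_m => (0 < nk.1)%N) J ->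
    (forall i, measurable (B i)) ->
    P [set t | forall i, i \in J -> B i (xi i.1 i.2 t)] =
    (\prod_(i <- J) P [set t | B i (xi i.1 i.2 t)])%E.
Hypothesis xi_int : forall n k, (0 < n)%N -> P.-integrable setT (fun t => (xi n k t)%:E).
Hypothesis xi_int2 : forall n k, (0 < n)%N -> P.-integrable setT (fun t => (xi n k t ^+ 2)%:E).
Hypothesis xi_mean : forall n k, (0 < n)%N -> Rintegral P setT (xi n k) = 0.
Hypothesis xi_var : forall n k, (0 < n)%N -> Rintegral P setT (fun t => xi n k t ^+ 2) = 1.
Local Notation X := (X xi).
Local Notation V := (V m).
Local Notation Eint := (Eint P).
Local Notation pw := (@pw R).

Definition xo (j : nat) (a : option 'I_m) (t : T) : R :=
  if a is Some k then xi j k t else 1.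

Fixpoint mono (n : nat) : W m n -> T -> R :=
  match n return W m n -> T -> R with
  | 0 => fun _ _ => 1
  | n'.+1 => fun (w : (option 'I_m * W m n')%type) t => xo n'.+1 w.1 t * @mono n' w.2 t
  end.

Definition blk (j : nat) (a b : option 'I_m) : seq (V * bool) :=
  match a, b with
  | None, None => [::]
  | Some k, None => [:: ((j, k), false)]
  | None, Some l => [:: ((j, l), false)]
  | Some k, Some l => if k == l then [:: ((j, k), true)]
                      else [:: ((j, k), false); ((j, l), false)]
  end.

Fixpoint lst (n : nat) : W m n -> W m n -> seq (V * bool) :=
  match n return W m n -> W m n -> seq (V * bool) with
  | 0 => fun _ _ => [::]
  | n'.+1 => fun (w w' : (option 'I_m * W m n')%type) => blk n'.+1 w.1 w'.1 ++ @lst n' w.2 w'.2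
  end.

Lemma blk_prod j a b t :
  \prod_(p <- blk j a b) pw p.2 (X p.1 t) = xo j a t * xo j b t.
Proof.
case: a => [k|]; case: b => [l|] /=.
- case: eqP => [<-|_]; rewrite !big_cons ?big_nil /= /X /= ?mulr1 ?expr2 //.
- by rewrite big_cons big_nil /X /= !mulr1.
- by rewrite big_cons big_nil /X /= mulr1 mul1r.
- by rewrite big_nil mulr1.
Qed.

Lemma blk_eq j a b : \prod_(p <- blk j a b) (if p.2 then 1 else 0 : R) = (a == b)%:R.
Proof.
case: a => [k|]; case: b => [l|] /=.
- case: eqP => [<-|kl]; rewrite !big_cons ?big_nil /= ?mulr1 ?mul0r ?eqxx //.
  by rewrite (_ : (Some k == Some l) = false) //; apply/eqP => -[].
- by rewrite big_cons big_nil /= mul0r.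
- by rewrite big_cons big_nil /= mul0r.
- by rewrite big_nil.
Qed.

Lemma blk_vars j a b : all (fun v : V => v.1 == j) (map fst (blk j a b)) &&
   uniq (map fst (blk j a b)).
Proof.
case: a => [k|]; case: b => [l|] //=; rewrite ?eqxx //.
case: eqP => [_|kl] /=; rewrite ?eqxx //= andbT inE.
by apply/negP => /eqP[/eqP]; rewrite (introF eqP kl).
Qed.

Lemma lst_prod n (w w' : W m n) t :
  mono w t * mono w' t = \prod_(p <- lst w w') pw p.2 (X p.1 t).
Proof.
elim: n w w' => [|n IH] w w' /=; first by rewrite big_nil mulr1.
by rewrite big_cat /= blk_prod -IH; ring.
Qed.

Lemma lst_eq n (w w' : W m n) :
  \prod_(p <- lst w w') (if p.2 then 1 else 0 : R) = (w == w')%:R.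
Proof.
elim: n w w' => [|n IH] w w' /=; first by case: w; case: w'; rewrite big_nil.
case: w => a w; case: w' => b w' /=.
rewrite big_cat /= blk_eq IH xpair_eqE.
by case: (a == b); case: (w == w'); rewrite /= ?mulr1 ?mul0r ?mulr0.
Qed.

Lemma lst_vars n (w w' : W m n) :
  all (fun v : V => (0 < v.1 <= n)%N) (map fst (lst w w')) && uniq (map fst (lst w w')).
Proof.
elim: n w w' => [|n IH] w w' //=.
have /andP[IHa IHu] := IH w.2 w'.2.
have /andP[Ba Bu] := blk_vars n.+1 w.1 w'.1.
rewrite map_cat all_cat cat_uniq Bu IHu andbT /=.
rewrite -andbA; apply/and3P; split.
- by apply/allP => v /(allP Ba) /eqP ->; rewrite /= leqnn.
- by apply/allP => v /(allP IHa) /andP[-> /leqW].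
- apply/hasPn => v /(allP IHa) /andP[_ vn]; apply/negP => /(allP Ba) /eqP vE.
  by move: vn; rewrite vE ltnn.
Qed.

Lemma KEY n (w w' : W m n) :
  P.-integrable setT (fun t => (mono w t * mono w' t)%:E) /\
  Eint (fun t => mono w t * mono w' t) = (w == w')%:R.
Proof.
have /andP[va vu] := lst_vars w w'.
have pL : all (@pos m) (map fst (lst w w')).
  by apply/allP => v /(allP va) /andP[].
have [ip Ep] := P4 xi_meas xi_indep xi_int xi_int2 xi_mean xi_var vu pL.
split.
  by apply: (eq_integrable measurableT _ _ _ ip) => t _; rewrite lst_prod.
rewrite -lst_eq -Ep; congr fine; apply: eq_integral => t _; by rewrite lst_prod.
Qed.
End Words.
Local Open Scope complex_scope.

Lemma sum_opt (V : zmodType) m (F : option 'I_m -> V) :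
  \sum_(a : option 'I_m) F a = F None + \sum_(k < m) F (Some k).
Proof.
rewrite (bigD1 None) //=; congr (_ + _).
rewrite (reindex_omap Some id) /=; last by case.
by apply: eq_bigl => k; rewrite eqxx.
Qed.

Lemma sum_unit (V : zmodType) (F : unit -> V) : \sum_(a : unit) F a = F tt.
Proof. by rewrite (big_pred1 tt) //; case. Qed.

Lemma sum_WS (V : zmodType) m n (F : W m n.+1 -> V) :
  \sum_(w : W m n.+1) F w = \sum_(a : option 'I_m) \sum_(w : W m n) F (a, w).
Proof. by rewrite pair_big /=; apply: eq_bigr; case. Qed.

Section Alg.
Context (R : realType) (d m : nat) (A : 'M[R[i]]_d) (B : 'I_m -> 'M[R[i]]_d).

Definition Mop (a : option 'I_m) := if a is Some k then B k else A.

Fixpoint coef (n : nat) : W m n -> 'M[R[i]]_d :=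
  match n return W m n -> 'M[R[i]]_d with
  | 0 => fun _ => 1%:M
  | n'.+1 => fun (w : (option 'I_m * W m n')%type) => Mop w.1 *m @coef n' w.2
  end.

Lemma expand (dm : measure_display) (T : measurableType dm)
  (xi : nat -> 'I_m -> T -> R) (u : 'cV[R[i]]_d) n t :
  sproc A B xi u n t = \sum_(w : W m n) (mono xi w t)%:C *: (coef w *m u).
Proof.
elim: n => [|n IH] /=; first by rewrite sum_unit /= scale1r mul1mx.
rewrite sum_WS sum_opt IH /=.
congr (_ + _).
  rewrite mulmx_sumr; apply: eq_bigr => w _.
  by rewrite mul1r -scalemxAr mulmxA.
apply: eq_bigr => k _; rewrite mulmx_sumr scaler_sumr; apply: eq_bigr => w _.
by rewrite -scalemxAr scalerA -rmorphM mulmxA.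
Qed.
End Alg.

Section Sums.
Context (R : realType) (dm : measure_display) (T : measurableType dm)
  (P : {measure set T -> \bar R}).

Lemma integrable_sum (I : Type) (s : seq I) (F : I -> T -> R) :
  (forall i, P.-integrable setT (fun t => (F i t)%:E)) ->
  P.-integrable setT (fun t => (\sum_(i <- s) F i t)%:E).
Proof.
move=> H; elim: s => [|a s IH].
  by apply: (eq_integrable measurableT (cst 0%E)) => [t _|]; rewrite ?big_nil //; exact: integrable0.
apply: (eq_integrable measurableT _ _ _ (integrableD measurableT (H a) IH)).
by move=> t _; rewrite big_cons EFinD.
Qed.

Lemma Rintegral_sum (I : Type) (s : seq I) (F : I -> T -> R) :
  (forall i, P.-integrable setT (fun t => (F i t)%:E)) ->
  Rintegral P setT (fun t => \sum_(i <- s) F i t) =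
  \sum_(i <- s) Rintegral P setT (F i).
Proof.
move=> H; elim: s => [|a s IH].
  rewrite big_nil (@eq_Rintegral _ _ _ P setT (fun _ => 0)); last by move=> t _; rewrite big_nil.
  by rewrite Rintegral_cst // mul0r.
rewrite big_cons -IH -RintegralD //; [|exact: H|exact: integrable_sum].
by apply: eq_Rintegral => t _; rewrite big_cons.
Qed.
End Sums.

Section GL.
Context (R : realType) (dm : measure_display) (T : measurableType dm)
  (P : probability T R) (m : nat) (xi : nat -> 'I_m -> T -> R).
Hypothesis xi_meas : forall n k, (0 < n)%N -> measurable_fun setT (xi n k).
Hypothesis xi_indep : forall (J : seq (nat * 'I_m)) (B : (nat * 'I_m) -> set R),
    uniq J -> all (fun nk : nat * 'I_m => (0 < nk.1)%N) J ->
    (forall i, measurable (B i)) ->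
    P [set t | forall i, i \in J -> B i (xi i.1 i.2 t)] =
    (\prod_(i <- J) P [set t | B i (xi i.1 i.2 t)])%E.
Hypothesis xi_int : forall n k, (0 < n)%N -> P.-integrable setT (fun t => (xi n k t)%:E).
Hypothesis xi_int2 : forall n k, (0 < n)%N -> P.-integrable setT (fun t => (xi n k t ^+ 2)%:E).
Hypothesis xi_mean : forall n k, (0 < n)%N -> Rintegral P setT (xi n k) = 0.
Hypothesis xi_var : forall n k, (0 < n)%N -> Rintegral P setT (fun t => xi n k t ^+ 2) = 1.

Local Notation mono := (mono xi).
Local Notation KEY := (KEY xi_meas xi_indep xi_int xi_int2 xi_mean xi_var).

Lemma GL n (a b : W m n -> R) :
  P.-integrable setT (fun t => ((\sum_w mono w t * a w) * (\sum_w mono w t * b w))%:E) /\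
  Rintegral P setT (fun t => (\sum_w mono w t * a w) * (\sum_w mono w t * b w)) =
  \sum_w a w * b w.
Proof.
have eqf t : (\sum_w mono w t * a w) * (\sum_w mono w t * b w) =
   \sum_w \sum_w' (mono w t * mono w' t) * (a w * b w').
  rewrite mulr_suml; apply: eq_bigr => w _; rewrite mulr_sumr.
  by apply: eq_bigr => w' _; ring.
have iterm w w' : P.-integrable setT (fun t => (mono w t * mono w' t * (a w * b w'))%:E).
  have [iw _] := KEY w w'.
  by apply: (eq_integrable measurableT _ _ _ (integrableZr measurableT (a w * b w') iw)) => t _; rewrite /= EFinM.
split.
  apply: (eq_integrable measurableT (fun t => (\sum_w \sum_w' (mono w t * mono w' t) * (a w * b w'))%:E)).
    by move=> t _; rewrite eqf.
  apply: integrable_sum => w; exact: integrable_sum.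
rewrite (@eq_Rintegral _ _ _ P setT (fun t => \sum_w \sum_w' (mono w t * mono w' t) * (a w * b w'))); last by move=> t _; rewrite eqf.
rewrite Rintegral_sum; last by move=> w; apply: integrable_sum.
apply: eq_bigr => w _; rewrite Rintegral_sum //.
rewrite (bigD1 w) //= big1 ?addr0.
  have [iw Ew] := KEY w w.
  by rewrite RintegralZr // [Rintegral _ _ _]Ew eqxx mul1r.
move=> w' ww'; have [iw Ew] := KEY w w'.
by rewrite RintegralZr // [Rintegral _ _ _]Ew eq_sym (negbTE ww') mul0r.
Qed.
End GL.

Section Cplx.
Context (R : realType).
Implicit Types (x y z : R[i]).
Lemma ReD x y : complex.Re (x + y) = complex.Re x + complex.Re y.
Proof. by case: x; case: y. Qed.
Lemma ImD x y : complex.Im (x + y) = complex.Im x + complex.Im y.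
Proof. by case: x; case: y. Qed.
Lemma Re0 : complex.Re (0 : R[i]) = 0. Proof. by []. Qed.
Lemma Im0 : complex.Im (0 : R[i]) = 0. Proof. by []. Qed.
Lemma ReMr (r : R) z : complex.Re (r%:C * z) = r * complex.Re z.
Proof. by case: z => a b /=; ring. Qed.
Lemma ImMr (r : R) z : complex.Im (r%:C * z) = r * complex.Im z.
Proof. by case: z => a b /=; ring. Qed.
Lemma ReMJ x y : complex.Re (x * y^*) =
  complex.Re x * complex.Re y + complex.Im x * complex.Im y.
Proof. by case: x => a b; case: y => c e /=; ring. Qed.
Lemma ImMJ x y : complex.Im (x * y^*) =
  complex.Im x * complex.Re y - complex.Re x * complex.Im y.
Proof. by case: x => a b; case: y => c e /=; ring. Qed.
Lemma Re_sum (I : Type) (s : seq I) (F : I -> R[i]) :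
  complex.Re (\sum_(i <- s) F i) = \sum_(i <- s) complex.Re (F i).
Proof. exact: (big_morph _ ReD Re0). Qed.
Lemma Im_sum (I : Type) (s : seq I) (F : I -> R[i]) :
  complex.Im (\sum_(i <- s) F i) = \sum_(i <- s) complex.Im (F i).
Proof. exact: (big_morph _ ImD Im0). Qed.
Lemma complex_eta x : x = complex.Re x +i* complex.Im x.
Proof. by case: x. Qed.
End Cplx.

Section VM.
Context (R : realType) (dm : measure_display) (T : measurableType dm)
  (P : probability T R) (m : nat) (xi : nat -> 'I_m -> T -> R).
Hypothesis xi_meas : forall n k, (0 < n)%N -> measurable_fun setT (xi n k).
Hypothesis xi_indep : forall (J : seq (nat * 'I_m)) (B : (nat * 'I_m) -> set R),
    uniq J -> all (fun nk : nat * 'I_m => (0 < nk.1)%N) J ->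
    (forall i, measurable (B i)) ->
    P [set t | forall i, i \in J -> B i (xi i.1 i.2 t)] =
    (\prod_(i <- J) P [set t | B i (xi i.1 i.2 t)])%E.
Hypothesis xi_int : forall n k, (0 < n)%N -> P.-integrable setT (fun t => (xi n k t)%:E).
Hypothesis xi_int2 : forall n k, (0 < n)%N -> P.-integrable setT (fun t => (xi n k t ^+ 2)%:E).
Hypothesis xi_mean : forall n k, (0 < n)%N -> Rintegral P setT (xi n k) = 0.
Hypothesis xi_var : forall n k, (0 < n)%N -> Rintegral P setT (fun t => xi n k t ^+ 2) = 1.
Context (d : nat) (A : 'M[R[i]]_d) (B : 'I_m -> 'M[R[i]]_d).

Local Notation mono := (mono xi).
Local Notation GL := (GL xi_meas xi_indep xi_int xi_int2 xi_mean xi_var).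
Local Notation coef := (coef A B).

Lemma entry_Re (u : 'cV[R[i]]_d) n t i :
  complex.Re (sproc A B xi u n t i 0) =
  \sum_(w : W m n) mono w t * complex.Re ((coef w *m u) i 0).
Proof.
rewrite expand summxE Re_sum; apply: eq_bigr => w _.
by rewrite mxE ReMr.
Qed.

Lemma entry_Im (u : 'cV[R[i]]_d) n t i :
  complex.Im (sproc A B xi u n t i 0) =
  \sum_(w : W m n) mono w t * complex.Im ((coef w *m u) i 0).
Proof.
rewrite expand summxE Im_sum; apply: eq_bigr => w _.
by rewrite mxE ImMr.
Qed.

Lemma Vmat_formula (u v : 'cV[R[i]]_d) n :
  Vmat P (sproc A B xi u) (sproc A B xi v) n =
  \sum_(w : W m n) (coef w *m u) *m ctrmx (coef w *m v).
Proof.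
apply/matrixP => i j; rewrite !mxE summxE /cexpect.
pose c := fun w : W m n => (coef w *m u) i 0.
pose e := fun w : W m n => (coef w *m v) j 0.
have Esum : \sum_(w : W m n) ((coef w *m u) *m ctrmx (coef w *m v)) i j =
            \sum_w c w * (e w)^*.
  apply: eq_bigr => w _; rewrite mxE big_ord1 /ctrmx /Defs.conjmx !mxE.
  by rewrite /c /e !mxE.
rewrite Esum [RHS]complex_eta Re_sum Im_sum; congr Complex.
- under eq_Rintegral do rewrite ReMJ entry_Re entry_Re entry_Im entry_Im.
  have [i1 E1] := GL (fun w => complex.Re (c w)) (fun w => complex.Re (e w)).
  have [i2 E2] := GL (fun w => complex.Im (c w)) (fun w => complex.Im (e w)).
  rewrite RintegralD // E1 E2 -big_split /=; apply: eq_bigr => w _.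
  by rewrite ReMJ.
- under eq_Rintegral do rewrite ImMJ entry_Re entry_Re entry_Im entry_Im.
  have [i1 E1] := GL (fun w => complex.Im (c w)) (fun w => complex.Re (e w)).
  have [i2 E2] := GL (fun w => complex.Re (c w)) (fun w => complex.Im (e w)).
  rewrite RintegralB // E1 E2 -sumrB /=; apply: eq_bigr => w _.
  by rewrite ImMJ.
Qed.
End VM.

Section Lin.
Context (R : realType).

Lemma ctrmx_mul p q r (M : 'M[R[i]]_(p, q)) (N : 'M[R[i]]_(q, r)) :
  ctrmx (M *m N) = ctrmx N *m ctrmx M.
Proof. by rewrite /ctrmx /Defs.conjmx map_mxM trmx_mul. Qed.

Lemma vecD d (X Y : 'M[R[i]]_d) : vec (X + Y) = vec X + vec Y.
Proof. by apply/matrixP => i j; rewrite !mxE. Qed.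

Lemma vec0 d : vec (0 : 'M[R[i]]_d) = 0.
Proof. by apply/matrixP => i j; rewrite !mxE. Qed.

Lemma vec_sum d (I : Type) (s : seq I) (F : I -> 'M[R[i]]_d) :
  vec (\sum_(i <- s) F i) = \sum_(i <- s) vec (F i).
Proof. exact: (big_morph _ (@vecD d) (@vec0 d)). Qed.

Lemma vec_conj d (M X : 'M[R[i]]_d) :
  vec (M *m X *m ctrmx M) = (Defs.conjmx M *t M) *m vec X.
Proof.
apply/matrixP => k z; rewrite ord1 {z}.
case: (mxtens_indexP k) => a b.
rewrite !mxE mxtens_indexK /=.
rewrite (reindex (@mxtens_index d d)) /=; last first.
  by exists (@mxtens_unindex d d) => l _; rewrite (mxtens_indexK, mxtens_unindexK).
transitivity (\sum_q \sum_p (Defs.conjmx M *t M) (mxtens_index (a, b)) (mxtens_index (q, p))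
   * vec X (mxtens_index (q, p)) 0); last first.
  by rewrite pair_big; apply: eq_bigr => -[q p].
apply: eq_bigr => q _; rewrite !mxE mulr_suml; apply: eq_bigr => p _.
by rewrite !mxE !mxtens_indexK /= mulrC mulrA.
Qed.

Context (d m : nat) (A : 'M[R[i]]_d) (B : 'I_m -> 'M[R[i]]_d).
Local Notation coef := (coef A B).
Local Notation Mop := (Mop A B).

Definition S (u v : 'cV[R[i]]_d) n :=
  \sum_(w : W m n) (coef w *m u) *m ctrmx (coef w *m v).

Lemma S_succ u v n : S u v n.+1 = \sum_a Mop a *m S u v n *m ctrmx (Mop a).
Proof.
rewrite /S sum_WS; apply: eq_bigr => a _.
rewrite mulmx_sumr mulmx_suml; apply: eq_bigr => w _ /=.
by rewrite -!mulmxA ctrmx_mul !mulmxA.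
Qed.

Lemma vec_S u v n : vec (S u v n) = DAB A B ^+ n *m vec (S u v 0).
Proof.
elim: n => [|n IH]; first by rewrite expr0 mul1mx.
rewrite S_succ vec_sum exprS -mulmxE -mulmxA -IH /DAB.
rewrite sum_opt mulmxDl mulmx_suml vec_conj; congr (_ + _).
by apply: eq_bigr => k _; rewrite vec_conj.
Qed.
End Lin.

Section Spec.
Context (R : realType) (d m : nat) (A : 'M[R[i]]_d) (B : 'I_m -> 'M[R[i]]_d).
Local Notation Mop := (Mop A B).
Local Notation N := (NAB A B).

Lemma ctrE p q (M : 'M[R[i]]_(p,q)) : ctrmx M = (M ^t*)%sesqui.
Proof. by rewrite /ctrmx /Defs.conjmx map_trmx. Qed.

Lemma ctrmxK p q (M : 'M[R[i]]_(p,q)) : ctrmx (ctrmx M) = M.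
Proof. by apply/matrixP => i j; rewrite !mxE conjcK. Qed.

Lemma ctrmxD p q (M M' : 'M[R[i]]_(p,q)) : ctrmx (M + M') = ctrmx M + ctrmx M'.
Proof. by apply/matrixP => i j; rewrite !mxE rmorphD. Qed.

Lemma ctrmx0 p q : ctrmx (0 : 'M[R[i]]_(p,q)) = 0.
Proof. by apply/matrixP => i j; rewrite !mxE conjc0. Qed.

Lemma ctrmx_sum p q (I : Type) (s : seq I) (F : I -> 'M[R[i]]_(p,q)) :
  ctrmx (\sum_(i <- s) F i) = \sum_(i <- s) ctrmx (F i).
Proof. exact: (big_morph _ (@ctrmxD p q) (@ctrmx0 p q)). Qed.

Lemma NE : N = \sum_a ctrmx (Mop a) *m Mop a.
Proof. by rewrite /NAB sum_opt. Qed.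

Lemma N_herm : ctrmx N = N.
Proof.
rewrite NE ctrmx_sum; apply: eq_bigr => a _.
by rewrite ctrmx_mul ctrmxK.
Qed.

Lemma conj_mul_norm (z : R[i]) :
  z^* * z = (complex.Re z ^+ 2 + complex.Im z ^+ 2)%:C.
Proof. by case: z => a b; apply/eqP; rewrite eq_complex /=; apply/andP; split; apply/eqP; ring. Qed.

Lemma vn (y : 'cV[R[i]]_d) : (ctrmx y *m y) 0 0 = (vnorm2 y)%:C.
Proof.
rewrite !mxE /vnorm2 rmorph_sum; apply: eq_bigr => i _.
by rewrite !mxE conj_mul_norm.
Qed.

Lemma N_quad (y : 'cV[R[i]]_d) :
  (ctrmx y *m N *m y) 0 0 = (\sum_a vnorm2 (Mop a *m y))%:C.
Proof.
rewrite NE mulmx_sumr mulmx_suml summxE rmorph_sum; apply: eq_bigr => a _.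
transitivity ((ctrmx (Mop a *m y) *m (Mop a *m y)) 0 0); first by rewrite ctrmx_mul !mulmxA.
exact: vn.
Qed.

Lemma lecR (a b : R) : (a%:C <= b%:C) = (a <= b).
Proof. by rewrite lecE /= eqxx. Qed.

Lemma vnorm2_ge0 (y : 'cV[R[i]]_d) : 0 <= vnorm2 y.
Proof. by apply: sumr_ge0 => i _; rewrite addr_ge0 // sqr_ge0. Qed.

Lemma vnorm2_eq0 (y : 'cV[R[i]]_d) : vnorm2 y = 0 -> y = 0.
Proof.
move=> /eqP; rewrite psumr_eq0; last by move=> i _; rewrite addr_ge0 // sqr_ge0.
move=> /allP H; apply/matrixP => i j; rewrite ord1 mxE.
have := H i (mem_index_enum _); rewrite paddr_eq0 ?sqr_ge0 // !sqrf_eq0 => /andP[/eqP a /eqP b].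
by case: (y i 0) a b => /= ? ? -> ->.
Qed.
End Spec.
Section SB.
Context (R : realType) (d m : nat) (A : 'M[R[i]]_d) (B : 'I_m -> 'M[R[i]]_d).
Local Notation Mop := (Mop A B).
Local Notation N := (NAB A B).

Lemma SB (gamma beta : R)
  (gamma_min : forall a : R[i], eigenvalue N a -> gamma%:C <= a)
  (beta_max : forall a : R[i], eigenvalue N a -> a <= beta%:C)
  (y : 'cV[R[i]]_d) :
  gamma * vnorm2 y <= \sum_a vnorm2 (Mop a *m y) <= beta * vnorm2 y.
Proof.
have normal : N \is normalmx.
  by apply/normalmxP; rewrite -ctrE N_herm.
have /orthomx_spectralP NEq := normal.
set P := spectralmx N in NEq; set D := spectral_diag N in NEq.
have Pu : P \is unitarymx := spectral_unitarymx N.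
have Punit : P \in unitmx := spectral_unit N.
have PiE : invmx P = ctrmx P by rewrite invmx_unitary // ctrE.
have eigD i : eigenvalue N (D 0 i).
  apply/eigenvalueP; exists (row i P).
    rewrite [in LHS]NEq !mulmxA -!row_mul mulmxV // mul1mx row_mul row_diag_mx.
    by rewrite -scalemxAl -rowE.
  apply/negP => /eqP h.
  have : row i (P *m invmx P) = 0 by rewrite row_mul h mul0mx.
  rewrite mulmxV // => /rowP/(_ i); rewrite !mxE eqxx /= => /eqP.
  by rewrite oner_eq0.
pose z := P *m y.
have quad : (ctrmx y *m N *m y) 0 0 = \sum_j D 0 j * ((z j 0)^* * z j 0).
  rewrite [in LHS]NEq PiE !mulmxA -ctrmx_mul -[ctrmx z *m _ *m P *m y]mulmxA.
  rewrite -/z mul_mx_diag !mxE; apply: eq_bigr => j _; rewrite !mxE.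
  by rewrite [_ * D 0 j]mulrC mulrA.
have nrm : (ctrmx y *m y) 0 0 = \sum_j ((z j 0)^* * z j 0).
  have -> : ctrmx y *m y = ctrmx z *m z.
    by rewrite /z ctrmx_mul -PiE mulmxA -[ctrmx y *m _ *m _]mulmxA mulVmx // mulmx1.
  by rewrite !mxE; apply: eq_bigr => j _; rewrite !mxE.
have zz j : 0 <= (z j 0)^* * z j 0 by rewrite mulrC; exact: mul_conjC_ge0.
rewrite -!lecR !rmorphM /= -N_quad quad -vn nrm mulr_sumr mulr_sumr.
apply/andP; split; apply: ler_sum => j _; apply: ler_wpM2r => //.
  exact: gamma_min.
exact: beta_max.
Qed.

Lemma gamma_ge0 (gamma : R) : eigenvalue N gamma%:C -> 0 <= gamma.
Proof.
move=> /eigenvalueP [v vN vn0].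
pose y := ctrmx v.
have yq : (ctrmx y *m N *m y) 0 0 = gamma%:C * (ctrmx y *m y) 0 0.
  by rewrite /y ctrmxK vN -scalemxAl mxE.
rewrite N_quad vn -rmorphM in yq; move/complexI: yq => yq.
have y0 : vnorm2 y != 0.
  apply/negP => /eqP /vnorm2_eq0 y0; move/eqP: vn0; apply.
  by rewrite -[v]ctrmxK -/y y0 ctrmx0.
have : 0 <= gamma * vnorm2 y by rewrite -yq sumr_ge0 // => a _; exact: vnorm2_ge0.
by rewrite pmulr_lge0 // lt_neqAle eq_sym y0 vnorm2_ge0.
Qed.
End SB.

Section RX.
Context (R : realType) (dm : measure_display) (T : measurableType dm)
  (P : probability T R) (m : nat) (xi : nat -> 'I_m -> T -> R).
Hypothesis xi_meas : forall n k, (0 < n)%N -> measurable_fun setT (xi n k).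
Hypothesis xi_indep : forall (J : seq (nat * 'I_m)) (B : (nat * 'I_m) -> set R),
    uniq J -> all (fun nk : nat * 'I_m => (0 < nk.1)%N) J ->
    (forall i, measurable (B i)) ->
    P [set t | forall i, i \in J -> B i (xi i.1 i.2 t)] =
    (\prod_(i <- J) P [set t | B i (xi i.1 i.2 t)])%E.
Hypothesis xi_int : forall n k, (0 < n)%N -> P.-integrable setT (fun t => (xi n k t)%:E).
Hypothesis xi_int2 : forall n k, (0 < n)%N -> P.-integrable setT (fun t => (xi n k t ^+ 2)%:E).
Hypothesis xi_mean : forall n k, (0 < n)%N -> Rintegral P setT (xi n k) = 0.
Hypothesis xi_var : forall n k, (0 < n)%N -> Rintegral P setT (fun t => xi n k t ^+ 2) = 1.
Context (d : nat) (A : 'M[R[i]]_d) (B : 'I_m -> 'M[R[i]]_d).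

Local Notation GL := (GL xi_meas xi_indep xi_int xi_int2 xi_mean xi_var).
Local Notation coef := (coef A B).

Lemma rx_formula (u : 'cV[R[i]]_d) n :
  Rintegral P setT (fun t => vnorm2 (sproc A B xi u n t)) =
  \sum_(w : W m n) vnorm2 (coef w *m u).
Proof.
pose a i := fun w : W m n => complex.Re ((coef w *m u) i 0).
pose b i := fun w : W m n => complex.Im ((coef w *m u) i 0).
have eqf t : vnorm2 (sproc A B xi u n t) =
  \sum_(i < d) ((\sum_w mono xi w t * a i w) * (\sum_w mono xi w t * a i w) +
                (\sum_w mono xi w t * b i w) * (\sum_w mono xi w t * b i w)).
  rewrite /vnorm2; apply: eq_bigr => i _.
  by rewrite entry_Re entry_Im !expr2.
have ii i : P.-integrable setT (fun t =>
   ((\sum_w mono xi w t * a i w) * (\sum_w mono xi w t * a i w) +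
    (\sum_w mono xi w t * b i w) * (\sum_w mono xi w t * b i w))%:E).
  have [i1 _] := GL (a i) (a i); have [i2 _] := GL (b i) (b i).
  apply: (eq_integrable measurableT _ _ _ (integrableD measurableT i1 i2)).
  by move=> t _; rewrite /= EFinD.
under eq_Rintegral do rewrite eqf.
rewrite Rintegral_sum //.
transitivity (\sum_(i < d) \sum_(w : W m n) (a i w * a i w + b i w * b i w)).
  apply: eq_bigr => i _.
  have [i1 E1] := GL (a i) (a i); have [i2 E2] := GL (b i) (b i).
  by rewrite RintegralD // E1 E2 big_split.
rewrite exchange_big; apply: eq_bigr => w _; rewrite /vnorm2.
by apply: eq_bigr => i _; rewrite !expr2.
Qed.
End RX.

Lemma Q_step (R : realType) d m (A : 'M[R[i]]_d) (B : 'I_m -> 'M[R[i]]_d)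
  (gamma beta : R)
  (gamma_min : forall a : R[i], eigenvalue (NAB A B) a -> gamma%:C <= a)
  (beta_max : forall a : R[i], eigenvalue (NAB A B) a -> a <= beta%:C)
  (u : 'cV[R[i]]_d) n :
  gamma * (\sum_(w : W m n) vnorm2 (coef A B w *m u)) <=
     \sum_(w : W m n.+1) vnorm2 (coef A B w *m u) <=
  beta * (\sum_(w : W m n) vnorm2 (coef A B w *m u)).
Proof.
have E : \sum_(w : W m n.+1) vnorm2 (coef A B w *m u) =
    \sum_(w : W m n) \sum_a vnorm2 (Mop A B a *m (coef A B w *m u)).
  rewrite sum_WS exchange_big; apply: eq_bigr => w _; apply: eq_bigr => a _ /=.
  by rewrite mulmxA.
rewrite E [gamma * _]mulr_sumr [beta * _]mulr_sumr.
apply/andP; split; apply: ler_sum => w _.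
  by have /andP[] := SB gamma_min beta_max (coef A B w *m u).
by have /andP[] := SB gamma_min beta_max (coef A B w *m u).
Qed.

Theorem proposition2p1 (R : realType) (dm : measure_display) (T : measurableType dm)
  (P : probability T R) (d m : nat)
  (A : 'M[R[i]]_d) (B : 'I_m -> 'M[R[i]]_d)
  (xi : nat -> 'I_m -> T -> R)
  (xi_meas : forall n k, (0 < n)%N -> measurable_fun setT (xi n k))
  (xi_indep : mutually_independent P (fun nk : nat * 'I_m => (0 < nk.1)%N)
                (fun nk => xi nk.1 nk.2))
  (xi_int : forall n k, (0 < n)%N -> P.-integrable setT (fun t => (xi n k t)%:E))
  (xi_int2 : forall n k, (0 < n)%N -> P.-integrable setT (fun t => (xi n k t ^+ 2)%:E))
  (xi_mean : forall n k, (0 < n)%N -> Rintegral P setT (xi n k) = 0)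
  (xi_var : forall n k, (0 < n)%N -> Rintegral P setT (fun t => xi n k t ^+ 2) = 1)
  (u v : 'cV[R[i]]_d) (gamma beta : R)
  (gamma_eig : eigenvalue (NAB A B) gamma%:C)
  (gamma_min : forall a : R[i], eigenvalue (NAB A B) a -> gamma%:C <= a)
  (beta_eig : eigenvalue (NAB A B) beta%:C)
  (beta_max : forall a : R[i], eigenvalue (NAB A B) a -> a <= beta%:C) :
  let x := sproc A B xi u in
  let y := sproc A B xi v in
  let U := fun n => vec (Vmat P x y n) in
  let r_x := fun n => Rintegral P setT (fun t => vnorm2 (x n t)) in
  (forall n : nat, U n = (DAB A B) ^+ n *m U 0%N) /\
  (forall n : nat, vnorm2 u * gamma ^+ n <= r_x n /\ r_x n <= vnorm2 u * beta ^+ n).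
Proof.
move=> x y U r_x.
have hind : forall (J : seq (nat * 'I_m)) (B : (nat * 'I_m) -> set R),
    uniq J -> all (fun nk : nat * 'I_m => (0 < nk.1)%N) J ->
    (forall i, measurable (B i)) ->
    P [set t | forall i, i \in J -> B i (xi i.1 i.2 t)] =
    (\prod_(i <- J) P [set t | B i (xi i.1 i.2 t)])%E := xi_indep.
split.
  move=> n; rewrite /U /x /y !(Vmat_formula xi_meas hind xi_int xi_int2 xi_mean xi_var).
  exact: vec_S.
have g0 := gamma_ge0 gamma_eig.
have b0 : 0 <= beta.
  by apply: le_trans g0 _; rewrite -lecR; exact: beta_max.
move=> n; rewrite /r_x /x (rx_formula xi_meas hind xi_int xi_int2 xi_mean xi_var).
elim: n => [|n [IHl IHu]].
  by rewrite !expr0 !mulr1 sum_unit /= mul1mx lexx.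
have /andP[Ql Qu] := Q_step gamma_min beta_max u n.
split.
  apply: le_trans Ql; rewrite exprS mulrCA; exact: ler_wpM2l.
apply: le_trans Qu _; rewrite exprS mulrCA; exact: ler_wpM2l.
Qed.
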